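(* Let $H$ be a digraph and $u,v\in V(H)$ with $d(u,v)=n$ in $H$, where $n\ge 4$. Let $Q=x_0x_1\ldots x_n$ be a shortest $(u,v)$-path in $H$. If $H[V(Q)]$ is a semicomplete digraph, then for any $x_i,x_j\in V(Q)$ with $0\le i<j\le n$ and any $p\in\{2,3,\ldots,n-1\}$, there exists a path of length $p$ from $x_j$ to $x_i$ in $H[V(Q)]$.
   Context: Digraphs are finite, without loops or multiple arcs. $d(u,v)$ is the length of a shortest $(u,v)$-path. $H[S]$ denotes the subdigraph induced by $S$. A semicomplete digraph is one in which every two distinct vertices $x,y$ are adjacent, i.e. $xy$ or $yx$ is an arc. *)

(* Defs.v *)
From mathcomp Require Import all_boot.
Set Implicit Arguments. Unset Strict Implicit. Unset Printing Implicit Defensive.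

(* A digraph on a finite vertex type T is an arc relation e : rel T
   (irreflexive = no loops; a relation has no multiple arcs). *)

(* [dpath_from e u v p] : the sequence u :: p is a (u,v)-path in the digraph e,
   i.e. its vertices are pairwise distinct, consecutive vertices are joined by
   arcs, and it ends at v.  Its length is [size p]. *)
Definition dpath_from (T : eqType) (e : rel T) (u v : T) (p : seq T) : bool :=
  [&& uniq (u :: p), path e u p & last u p == v].

Definition dist_is (T : eqType) (e : rel T) (u v : T) (n : nat) : Prop :=
  (exists p, dpath_from e u v p /\ size p = n) /\
  (forall p, dpath_from e u v p -> n <= size p).

Definition induced (T : eqType) (e : rel T) (S : pred T) : rel T :=
  fun x y => [&& S x, S y & e x y].

Definition semicomplete_on (T : eqType) (e : rel T) (S : pred T) : Prop :=
  forall x y, S x -> S y -> x != y -> e x y || e y x.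

(* Main.v *)
Require Import Defs.
From mathcomp Require Import all_boot zify.

Definition st (a b : nat) : bool := (b == a.+1) || (b.+2 <= a).

Lemma path_iota x c : path st x (iota x.+1 c).
Proof. elim: c x => [|c IH] x //=. by rewrite /st eqxx IH. Qed.

Lemma last_iota x c : last x (iota x.+1 c) = x + c.
Proof. elim: c x => [|c IH] x /=; first by rewrite addn0. by rewrite IH addSnnS. Qed.

Lemma comb3 j f a l k g n i :
  k + g = i -> j + f <= n -> i < a -> a + l < j -> a.+2 <= j + f -> k.+2 <= a + l ->
  exists s, [/\ path st j s, uniq (j :: s), all (fun t => t <= n) s,
             last j s = i & size s = f + l.+1 + g.+1].
Proof.
move=> Hi Hf Ha Hl Hj Hk.
exists (iota j.+1 f ++ (a :: iota a.+1 l) ++ (k :: iota k.+1 g)); split.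
- rewrite !cat_path path_iota last_iota /= path_iota last_iota /= path_iota /st.
  rewrite !andbT. apply/andP; split; apply/orP; right; lia.
- rewrite cons_uniq !cat_uniq !cons_uniq !iota_uniq.
  repeat (apply/andP; split) => //; try (apply/hasPn => t);
    rewrite ?mem_cat ?in_cons ?mem_iota; try lia.
- apply/allP => t; rewrite !mem_cat !in_cons !mem_iota; lia.
- rewrite !last_cat /= !last_iota; lia.
- rewrite !size_cat /= !size_iota; lia.
Qed.

Lemma comb2 j f k g n i :
  k + g = i -> j + f <= n -> i < j -> k.+2 <= j + f ->
  exists s, [/\ path st j s, uniq (j :: s), all (fun t => t <= n) s,
             last j s = i & size s = f + g.+1].
Proof.
move=> Hi Hf Ha Hk.
exists (iota j.+1 f ++ (k :: iota k.+1 g)); split.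
- rewrite !cat_path path_iota last_iota /= path_iota /st.
  rewrite !andbT. apply/orP; right; lia.
- rewrite cons_uniq !cat_uniq !cons_uniq !iota_uniq.
  repeat (apply/andP; split) => //; try (apply/hasPn => t);
    rewrite ?mem_cat ?in_cons ?mem_iota; try lia.
- apply/allP => t; rewrite !mem_cat !in_cons !mem_iota; lia.
- rewrite !last_cat /= !last_iota; lia.
- rewrite !size_cat /= !size_iota; lia.
Qed.

Lemma comb n i j p : 4 <= n -> i < j -> j <= n -> 2 <= p -> p <= n - 1 ->
  exists s, [/\ path st j s, uniq (j :: s), all (fun t => t <= n) s,
             last j s = i & size s = p].
Proof.
move=> n4 ij jn p2 pn.
case: (leqP p (i + (n - j)).+1) => hp.
- pose g := minn i p.-1. pose f := p.-1 - g.
  have [s [H1 H2 H3 H4 H5]] := @comb2 j f (i - g) g n i ltac:(lia) ltac:(lia) ij ltac:(lia).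
  exists s; split => //; lia.
- pose l := p - (i + (n - j)).+2.
  pose a := maxn i.+1 (2 - l).
  have [s [H1 H2 H3 H4 H5]] := @comb3 j (n - j) a l 0 i n i ltac:(lia) ltac:(lia) ltac:(lia) ltac:(lia) ltac:(lia) ltac:(lia).
  exists s; split => //; lia.
Qed.

Lemma last_take_nth (T : Type) (s : seq T) x0 k :
  k <= size s -> last x0 (take k s) = nth x0 (x0 :: s) k.
Proof.
elim: s x0 k => [|y s IH] x0 [|k] //= hk.
by rewrite IH // (set_nth_default x0) //=.
Qed.

Section M.
Variables (T : finType) (e : rel T) (u v : T) (n : nat) (q : seq T).
Hypothesis hd : dist_is e u v n.
Hypothesis hQ : dpath_from e u v q.
Hypothesis hsz : size q = n.

Lemma no_shortcut a b : b.+2 <= a -> a <= n -> ~~ e (nth u (u :: q) b) (nth u (u :: q) a).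
Proof.
move=> ba an; apply/negP => he.
move/and3P: hQ => [hu hp hl].
pose p' := take b q ++ drop a.-1 q.
have hdrop : drop a.-1 q = nth u (u :: q) a :: drop a q.
  rewrite (drop_nth u) ?hsz; last lia.
  by case: (a) ba => [|a'] //=.
have hpa : path e (nth u (u :: q) a) (drop a q).
  move: hp; rewrite -{1}(cat_take_drop a q) cat_path => /andP [_].
  by rewrite last_take_nth // hsz.
have hpb : path e u (take b q).
  by move: hp; rewrite -{1}(cat_take_drop b q) cat_path => /andP [].
have hlb : last u (take b q) = nth u (u :: q) b by rewrite last_take_nth // hsz; lia.
have hla : last (nth u (u :: q) a) (drop a q) = v.
  by rewrite -(eqP hl) -[in RHS](cat_take_drop a q) last_cat last_take_nth // hsz.
have : dpath_from e u v p'.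
  apply/and3P; split.
  - apply: (subseq_uniq _ hu).
    rewrite /= eqxx.
    rewrite -[X in subseq _ X](cat_take_drop b q).
    apply: cat_subseq => //.
    have -> : drop a.-1 q = drop (a.-1 - b) (drop b q) by rewrite drop_drop; congr drop; lia.
    exact: drop_subseq.
  - by rewrite /p' cat_path hpb hlb hdrop /= he hpa.
  - by rewrite /p' last_cat hlb hdrop /= hla.
move/hd.2; rewrite /p' size_cat size_take size_drop hsz.
case: ifP; lia.
Qed.
End M.

Lemma path_map_st (T : Type) (x : nat -> T) (r : rel T) n :
  (forall a b, a <= n -> b <= n -> st a b -> r (x a) (x b)) ->
  forall s j, j <= n -> all (fun t => t <= n) s -> path st j s -> path r (x j) (map x s).
Proof.
move=> H; elim=> [|y s IH] j //= jn /andP [yn sn] /andP [hs hp].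
by rewrite H // IH.
Qed.

(* Q = x_0 x_1 ... x_n is represented as u :: q, x_i = nth u (u :: q) i. *)
Theorem lemma2p6 (T : finType) (e : rel T) (e_irr : irreflexive e)
  (u v : T) (n : nat) (n_ge4 : 4 <= n) (hd : dist_is e u v n)
  (q : seq T) (hQ : dpath_from e u v q) (hsz : size q = n)
  (hsc : semicomplete_on e (fun y => y \in u :: q)) :
  forall i j p, i < j -> j <= n -> 2 <= p -> p <= n - 1 ->
    exists r, dpath_from (induced e (fun y => y \in u :: q))
                         (nth u (u :: q) j) (nth u (u :: q) i) r
              /\ size r = p.
Proof.
move=> i j p ij jn p2 pn.
have [s [H1 H2 H3 H4 H5]] := @comb n i j p n_ge4 ij jn p2 pn.
have hQ' := hQ; move/and3P: hQ' => [hu hp hl].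
pose x := fun t => nth u (u :: q) t.
have memx t : t <= n -> x t \in u :: q by move=> tn; apply: mem_nth => /=; lia.
have step a b : a <= n -> b <= n -> st a b -> induced e (fun y => y \in u :: q) (x a) (x b).
  move=> an bn /orP [/eqP hb0 | hb]; [subst b|]; rewrite /induced memx // memx //=.
  - move/(pathP u): hp => /(_ a) Hp; apply: Hp; lia.
  - have hne : x a != x b by rewrite /x nth_uniq //=; lia.
    case/orP: (hsc (x a) (x b) (memx a an) (memx b bn) hne) => // hba. by move: (@no_shortcut T e u v n q hd hQ hsz a b hb an); rewrite hba.
exists (map x s); split; last by rewrite size_map.
apply/and3P; split.
- have -> : nth u (u :: q) j :: map x s = map x (j :: s) by [].
  rewrite map_inj_in_uniq // => a b ha hb /eqP.
  move: ha hb; rewrite !in_cons => ha hb.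
  have an : a <= n by case/orP: ha => [/eqP -> // | /(allP H3)].
  have bn : b <= n by case/orP: hb => [/eqP -> // | /(allP H3)].
  by rewrite /x nth_uniq //= ?ltnS ?hsz // => /eqP.
- exact: (@path_map_st _ x _ n step s j jn H3 H1).
- by rewrite last_map H4.
Qed.
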